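(* Let $n$ be a positive integer, $1\le k\le n$, and $w\in\mathfrak S_n$. The relation $\le_{\mathcal P_w(n,k)}$ on $\mathrm{Inv}_k(w)$ is a partial order (in particular, it is antisymmetric). Furthermore, if $X\in\mathrm{Inv}_{k+1}(w)$, then the elements of $P(X)$ form an antichain in $\mathcal P_w(n,k)$.
   Context: $\mathfrak S_n$ is the symmetric group on $[n]$. $\binom{[n]}{m}$ is the set of $m$-element subsets of $[n]$, written $[x_1,\dots,x_m]$ with $x_1<\dots<x_m$. For $X=[x_1,\dots,x_m]$, $X_i$ is $X$ with $x_i$ removed and $P(X)=\{X_1,\dots,X_m\}$. $\mathrm{Inv}_m(w)=\{[x_1,\dots,x_m]\in\binom{[n]}{m}: w^{-1}(x_1)>\dots>w^{-1}(x_m)\}$. $X\in\binom{[n]}{m}$ is an $m$-quasi-inversion of $w$ if exactly one of the pairs $[x_a,x_b]$, $a<b$, is not in $\mathrm{Inv}_2(w)$. The relation $\le_{\mathcal P_w(n,k)}$ on $\mathrm{Inv}_k(w)$ is the reflexive-transitive closure of the quasi-inversion relations: whenever $X\in\binom{[n]}{k+1}$ is a $(k+1)$-quasi-inversion with $P(X)\cap\mathrm{Inv}_k(w)=\{X_i,X_{i+1}\}$, set $X_i<X_{i+1}$ if $k-i$ is odd and $X_{i+1}<X_i$ if $k-i$ is even. $\mathcal P_w(n,k)$ denotes $\mathrm{Inv}_k(w)$ with this relation. *)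

(* Defs.v *)
(* [n] = {1..n} is modelled by 'I_n = {0..n-1} (order-preserving relabeling). *)
From mathcomp Require Import all_boot all_fingroup.
From Stdlib Require Import Relations.
Set Implicit Arguments. Unset Strict Implicit. Unset Printing Implicit Defensive.

Section Defs.
Variable n : nat.

Definition elts (X : {set 'I_n}) : seq 'I_n :=
  sort (fun a b : 'I_n => (a <= b)%N) (enum X).

Definition invk (m : nat) (w : 'S_n) (X : {set 'I_n}) : bool :=
  (#|X| == m) && sorted (fun a b : 'I_n => (w^-1)%g b < (w^-1)%g a)%N (elts X).

(* X_i : X with x_i removed (i is 1-indexed) *)
Definition Xrem (X : {set 'I_n}) (i : nat) : {set 'I_n} :=
  [set x in X | index x (elts X) != i.-1].

Definition PX (X : {set 'I_n}) : {set {set 'I_n}} :=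
  [set Xrem X (val i).+1 | i : 'I_#|X|].

Definition quasi_inv (m : nat) (w : 'S_n) (X : {set 'I_n}) : bool :=
  (#|X| == m) &&
  (#|[set p : 'I_n * 'I_n | [&& p.1 \in X, p.2 \in X, (p.1 < p.2)%N &
                                ~~ invk 2 w [set p.1; p.2]]]| == 1).

(* generating relations of <=_{P_w(n,k)} : qcover k w Y Z means Y < Z *)
Definition qcover (k : nat) (w : 'S_n) (Y Z : {set 'I_n}) : Prop :=
  exists (X : {set 'I_n}) (i : nat),
    [/\ quasi_inv k.+1 w X, (1 <= i <= k)%N,
        PX X :&: [set U | invk k w U] = [set Xrem X i; Xrem X i.+1] &
        (if odd (k - i) then Y = Xrem X i /\ Z = Xrem X i.+1
         else Y = Xrem X i.+1 /\ Z = Xrem X i)].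

Definition Ple (k : nat) (w : 'S_n) : relation {set 'I_n} :=
  clos_refl_trans _ (qcover k w).

End Defs.

(* Main.v *)
Require Import Defs.
From mathcomp Require Import all_boot all_fingroup.
From Stdlib Require Import Relations.
From mathcomp Require Import all_algebra zify ring.
Set Implicit Arguments. Unset Strict Implicit. Unset Printing Implicit Defensive.

Section Aux.
Variable n : nat.
Implicit Types (X Y Z S : {set 'I_n}).

Definition leI := fun a b : 'I_n => (a <= b)%N.

Lemma leI_trans : ssrbool.transitive leI.
Proof. by move=> a b c; apply: leq_trans. Qed.

Lemma elts_eq S (t : seq 'I_n) : sorted leI t -> uniq t -> S =i t -> elts S = t.
Proof.
move=> st ut St; rewrite /elts.
apply: (sorted_eq leI_trans).
- by move=> a b /andP[ab ba]; apply: val_inj; apply/eqP; rewrite eqn_leq; apply/andP; split.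
- by apply: sort_sorted => a b; apply: leq_total.
- exact: st.
- rewrite perm_sort; apply: uniq_perm => //; first exact: enum_uniq.
  by move=> x; rewrite mem_enum St.
Qed.

Lemma elts_sorted S : sorted leI (elts S).
Proof. by apply: sort_sorted => a b; apply: leq_total. Qed.

Lemma elts_uniq S : uniq (elts S).
Proof. by rewrite sort_uniq enum_uniq. Qed.

Lemma mem_elts S x : (x \in elts S) = (x \in S).
Proof. by rewrite mem_sort mem_enum. Qed.

Lemma size_elts S : size (elts S) = #|S|.
Proof. by rewrite size_sort cardE. Qed.

Lemma mem_Xrem X (x0 : 'I_n) m x : m < #|X| ->
  (x \in Xrem X m.+1) = (x \in X) && (x != nth x0 (elts X) m).
Proof.
move=> mX; rewrite /Xrem inE /=.
case xX: (x \in X) => //=.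
apply/idP/idP.
- apply: contra => /eqP ->; rewrite index_uniq ?size_elts //; exact: elts_uniq.
- apply: contra => /eqP <-; rewrite nth_index // mem_elts //.
Qed.

Lemma elts_Xrem X (x0 : 'I_n) m : m < #|X| ->
  elts (Xrem X m.+1) = take m (elts X) ++ drop m.+1 (elts X).
Proof.
move=> mX; set s := elts X.
have us : uniq s by exact: elts_uniq.
have Es : s = take m s ++ nth x0 s m :: drop m.+1 s.
  by rewrite -drop_nth ?size_elts // cat_take_drop.
have sub : subseq (take m s ++ drop m.+1 s) s.
  rewrite {3}Es; apply: cat_subseq => //; exact: subseq_cons.
apply: elts_eq.
- exact: (subseq_sorted leI_trans sub (elts_sorted X)).
- exact: (subseq_uniq sub us).
- move=> x; rewrite (mem_Xrem x0) // -mem_elts -/s.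
  have := us; rewrite {1}Es cat_uniq => /and3P[_ H1 /andP[nd _]].
  have nt : nth x0 s m \notin take m s.
    by apply: contra H1 => xt; apply/hasP; exists (nth x0 s m) => //; exact: mem_head.
  rewrite {1}Es !mem_cat inE.
  case: (x =P nth x0 s m) => [->|_]; first by rewrite (negbTE nt) (negbTE nd).
  by rewrite andbT orFb.

Qed.

Variable w : 'S_n.
Local Notation p := (fun x : 'I_n => (w^-1)%g x).

Lemma inv_pair m S u v : invk m w S -> u \in S -> v \in S -> u < v ->
  p v < p u.
Proof.
move=> /andP[_ sp] uS vS uv.
set t := elts S.
have ut : u \in t by rewrite mem_elts.
have vt : v \in t by rewrite mem_elts.
have jl : index u t != index v t.
  apply: contraTneq uv => E.
  by rewrite -(nth_index u ut) E (nth_index u vt) ltnn.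
have [lj|jl'] := ltnP (index v t) (index u t).
  have := sorted_ltn_nth leI_trans u (elts_sorted S).
  move=> /(_ (index v t) (index u t)); rewrite !inE !index_mem => /(_ vt ut lj).
  by rewrite /leI !nth_index // leqNgt uv.
have lt : index u t < index v t by rewrite ltn_neqAle jl jl'.
have tr : ssrbool.transitive (fun a b : 'I_n => (w^-1)%g b < (w^-1)%g a).
  by move=> a b c H1 H2; apply: ltn_trans H2 H1.
have := sorted_ltn_nth tr u sp (index u t) (index v t).
by rewrite !inE !index_mem => /(_ ut vt lt); rewrite !nth_index.
Qed.

End Aux.

Import GRing.Theory.
Section Pot.
Variables (n k : nat) (w : 'S_n).
Local Open Scope ring_scope.

Definition sgn (j : nat) : int := if odd (k - j.+1) then -1 else 1.

Fixpoint G (h : 'I_n -> int) (j : nat) (t : seq 'I_n) : int :=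
  match t with [::] => 0 | x :: t' => sgn j * h x + G h j.+1 t' end.

Lemma G_cat h j a b : G h j (a ++ b) = G h j a + G h (j + size a)%N b.
Proof.
elim: a j => [|x a IH] j /=; first by rewrite add0r addn0.
by rewrite IH addnS addrA.
Qed.

Lemma G0 h j t : (forall x, x \in t -> h x = 0) -> G h j t = 0.
Proof.
elim: t j => [|x t IH] j //= H.
by rewrite H ?mem_head // mulr0 add0r IH // => y yt; apply: H; rewrite inE yt orbT.
Qed.

Lemma G_mid h j a x b :
  G h j (a ++ x :: b) = G h j a + sgn (j + size a) * h x + G h (j + size a).+1 b.
Proof. by rewrite G_cat /= addrA. Qed.

Definition F h (Y : {set 'I_n}) := G h 0 (elts Y).

Lemma cover_step (x0 : 'I_n) Y Z : qcover k w Y Z ->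
  exists a b : 'I_n, [/\ (a < b)%N, ((w^-1)%g a < (w^-1)%g b)%N &
     forall h, F h Z = F h Y + (h b - h a)].
Proof.
case=> X [i [/andP[/eqP cX qX] /andP[i1 ik] EP Hc]].
case: i i1 ik EP Hc => // m _ mk EP Hc.
set s := elts X.
have ms : (m.+1 < size s)%N by rewrite size_elts cX ltnS.
have ms' : (m < size s)%N by apply: ltnW.
have us : uniq s by exact: elts_uniq.
set A := nth x0 s m; set B := nth x0 s m.+1.
have E1 : elts (Xrem X m.+1) = take m s ++ B :: drop m.+2 s.
  by rewrite (elts_Xrem x0) -?size_elts // -/s (drop_nth x0).
have E2 : elts (Xrem X m.+2) = take m s ++ A :: drop m.+2 s.
  by rewrite (elts_Xrem x0) -?size_elts // -/s (take_nth x0) // cat_rcons.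
have inv1 : invk k w (Xrem X m.+1).
  have : Xrem X m.+1 \in [set Xrem X m.+1; Xrem X m.+2] by rewrite !inE eqxx.
  by rewrite -EP !inE => /andP[_].
have inv2 : invk k w (Xrem X m.+2).
  have : Xrem X m.+2 \in [set Xrem X m.+1; Xrem X m.+2] by rewrite !inE eqxx orbT.
  by rewrite -EP !inE => /andP[_].
have AB : A != B by rewrite nth_uniq //; apply/eqP; lia.
have leAB : (A <= B)%N.
  have := sorted_ltn_nth (@leI_trans n) x0 (elts_sorted X) m m.+1.
  by rewrite !inE => /(_ ms' ms (ltnSn m)).
have AX : A \in X by rewrite -mem_elts mem_nth.
have BX : B \in X by rewrite -mem_elts mem_nth.
have [[u v] uvP] : exists x, x \in [set p : 'I_n * 'I_n | [&& p.1 \in X, p.2 \in X, (p.1 < p.2)%N &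
                                ~~ invk 2 w [set p.1; p.2]]].
  by apply/card_gt0P; rewrite (eqP qX).
move: uvP; rewrite inE /= => /and4P[uX vX uv ninv].
have uvne : u != v by rewrite neq_ltn uv.
have ninv' : ~~ ((w^-1)%g v < (w^-1)%g u)%N.
  apply: contra ninv => H; rewrite /invk cards2 uvne /=.
  rewrite (@elts_eq _ _ [:: u; v]) //=.
  - by rewrite andbT.
  - by rewrite /leI andbT ltnW.
  - by rewrite inE uvne.
  - by move=> x; rewrite !inE.
have HA : (A == u) || (A == v).
  apply/negPn/negP => /norP[Au Av].
  have := @inv_pair _ w k _ u v inv1; rewrite !(mem_Xrem x0) -?size_elts // -/s.
  rewrite uX vX eq_sym Au eq_sym Av => /(_ isT isT uv) H; by rewrite H in ninv'.
have HB : (B == u) || (B == v).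
  apply/negPn/negP => /norP[Bu Bv].
  have := @inv_pair _ w k _ u v inv2; rewrite !(mem_Xrem x0) -?size_elts // -/s.
  rewrite uX vX eq_sym Bu eq_sym Bv => /(_ isT isT uv) H; by rewrite H in ninv'.
have [Au Bv] : A = u /\ B = v.
  case/orP: HA => /eqP HA; case/orP: HB => /eqP HB.
  - by move: AB; rewrite HA HB eqxx.
  - by [].
  - by move: leAB; rewrite HA HB leqNgt uv.
  - by move: AB; rewrite HA HB eqxx.
rewrite -Au -Bv in ninv'.
exists A, B; split.
- by rewrite ltn_neqAle leAB andbT.
- have pne : (w^-1)%g A != (w^-1)%g B.
    by apply: contra AB => /eqP /perm_inj ->.
  rewrite ltn_neqAle; apply/andP; split; [exact: pne | by rewrite leqNgt].
move=> h; rewrite /F.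
have sz : size (take m s) = m by rewrite size_take ms'.
move: Hc; rewrite /sgn; case: ifP => od [-> ->];
  rewrite E1 E2 !G_mid add0n sz /sgn od; ring.
Qed.

End Pot.

Import Num.Theory.
Import order.Order.TTheory.
Section Main.
Variables (n k : nat) (w : 'S_n) (x0 : 'I_n).
Local Open Scope ring_scope.

Lemma Ple_weak Y Z : Ple k w Y Z -> forall h : 'I_n -> int,
  (forall a b : 'I_n, (a < b)%N -> ((w^-1)%g a < (w^-1)%g b)%N -> h a <= h b) ->
  F k h Y <= F k h Z.
Proof.
move=> P h Hh; elim: P => {Y Z} [Y Z C|Y|Y Z U _ IH1 _ IH2].
- have [a [b [ab pab E]]] := cover_step x0 C.
  rewrite E lerDl subr_ge0; exact: Hh.
- by [].
- exact: le_trans IH1 IH2.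
Qed.

Definition hv (y : 'I_n) : int := (val y)%:Z.

Lemma Ple_strict Y Z : Ple k w Y Z -> Y = Z \/ F k hv Y < F k hv Z.
Proof.
elim=> {Y Z} [Y Z C|Y|Y Z U _ IH1 _ IH2].
- right; have [a [b [ab pab E]]] := cover_step x0 C.
  by rewrite E ltrDl subr_gt0 /hv ltz_nat.
- by left.
- case: IH1 => [->|H1]; first by [].
  case: IH2 => [<-|H2]; first by right.
  by right; exact: lt_trans H1 H2.
Qed.

End Main.

Theorem lemma3p5 (n k : nat) (w : 'S_n) :
  (0 < n)%N -> (1 <= k <= n)%N ->
  [/\ (forall Y, invk k w Y -> Ple k w Y Y),
      (forall Y Z U, invk k w Y -> invk k w Z -> invk k w U ->
         Ple k w Y Z -> Ple k w Z U -> Ple k w Y U),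
      (forall Y Z, invk k w Y -> invk k w Z ->
         Ple k w Y Z -> Ple k w Z Y -> Y = Z) &
      (forall X, invk k.+1 w X ->
         forall Y Z, Y \in PX X -> Z \in PX X -> Ple k w Y Z -> Y = Z)].
Proof.
move=> n0 _; pose x0 : 'I_n := Ordinal n0.
split.
- by move=> Y _; apply: rt_refl.
- by move=> Y Z U _ _ _; apply: rt_trans.
- move=> Y Z _ _ P1 P2.
  case: (Ple_strict x0 P1) => // H1.
  case: (Ple_strict x0 P2) => // H2.
  by have := lt_trans H1 H2; rewrite ltxx.
move=> X iX Y Z /imsetP[a _ ->] /imsetP[b _ ->] P.
case: (eqVneq a b) => [->//|ab].
exfalso.
set s := elts X.
have us : uniq s by exact: elts_uniq.
have aS : (val a < size s)%N by rewrite /s size_elts ltn_ord.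
have bS : (val b < size s)%N by rewrite /s size_elts ltn_ord.
set c := nth x0 s a.
have cX : c \in X by rewrite -mem_elts mem_nth.
have cZ : c \in Xrem X (val b).+1.
  rewrite (mem_Xrem x0) ?ltn_ord // cX /= nth_uniq //.
have Yc : forall x, x \in Xrem X (val a).+1 -> x \in X /\ x != c.
  by move=> x; rewrite (mem_Xrem x0) ?ltn_ord // => /andP[].
pose p := fun x : 'I_n => (w^-1)%g x.
pose h1 : 'I_n -> int := fun y => if (y == c) || ((c < y)%N && (p c < p y)%N) then 1%R else 0%R.
pose h2 : 'I_n -> int := fun y => if (y == c) || ((y < c)%N && (p y < p c)%N) then (-1)%R else 0%R.
have m1 : forall a' b' : 'I_n, (a' < b')%N -> (p a' < p b')%N -> (h1 a' <= h1 b')%R.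
  move=> a' b' ab' pab'; rewrite /h1.
  case: ifP => H1; case: ifP => H2 //.
  exfalso; move/negbT: H2; rewrite negb_or negb_and => /andP[_].
  rewrite -!leqNgt => H5; case/orP: H1 => [/eqP E|/andP[H3 H4]].
    by rewrite E in ab' pab'; move: H5 => /orP[]; lia.
  by move: H5 => /orP[]; lia.
have m2 : forall a' b' : 'I_n, (a' < b')%N -> (p a' < p b')%N -> (h2 a' <= h2 b')%R.
  move=> a' b' ab' pab'; rewrite /h2.
  case: ifP => H1; case: ifP => H2 //.
  exfalso; move/negbT: H1; rewrite negb_or negb_and => /andP[_].
  rewrite -!leqNgt => H5; case/orP: H2 => [/eqP E|/andP[H3 H4]].
    by rewrite E in ab' pab'; move: H5 => /orP[]; lia.
  by move: H5 => /orP[]; lia.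
have zY : forall h : 'I_n -> int, (forall x, x \in X -> x != c -> h x = 0%R) ->
    F k h (Xrem X (val a).+1) = 0%R.
  move=> h Hh; apply: G0 => x; rewrite mem_elts => /Yc[xX xc]; exact: Hh.
have h10 : forall x, x \in X -> x != c -> h1 x = 0%R.
  move=> x xX xc; rewrite /h1 (negbTE xc) /=.
  case: ifP => // /andP[H1 H2].
  have := inv_pair iX cX xX H1; rewrite /p in H2; lia.
have h20 : forall x, x \in X -> x != c -> h2 x = 0%R.
  move=> x xX xc; rewrite /h2 (negbTE xc) /=.
  case: ifP => // /andP[H1 H2].
  have := inv_pair iX xX cX H1; rewrite /p in H2; lia.
have [t1 [t2 [Et n1 n2]]] : exists t1 t2, [/\ elts (Xrem X (val b).+1) = t1 ++ c :: t2,
     forall x, x \in t1 -> x \in X /\ x != c & forall x, x \in t2 -> x \in X /\ x != c].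
  set t := elts (Xrem X (val b).+1).
  have ct : c \in t by rewrite mem_elts.
  have ut : uniq t by exact: elts_uniq.
  have Et : t = take (index c t) t ++ c :: drop (index c t).+1 t.
    by rewrite -[in LHS](cat_take_drop (index c t) t) (drop_nth c) ?index_mem // nth_index.
  have memX : forall x, x \in t -> x \in X.
    by move=> x; rewrite mem_elts (mem_Xrem x0) ?ltn_ord // => /andP[].
  move: (ut); rewrite {1}Et cat_uniq => /and3P[_ H1 /andP[nd _]].
  exists (take (index c t) t), (drop (index c t).+1 t); split => //.
  - move=> x xt; split; first by apply: memX; rewrite Et mem_cat xt.
    apply: contraNneq H1 => E; apply/hasP; exists x; rewrite ?E ?mem_head //.
    by rewrite E in xt.
  - move=> x xt; split; first by apply: memX; rewrite Et mem_cat inE xt !orbT.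
    by apply: contraNneq nd => E; rewrite E in xt.
have w1 := Ple_weak x0 P m1.
have w2 := Ple_weak x0 P m2.
rewrite zY // in w1; rewrite zY // in w2.
move: w1 w2; rewrite /F Et !G_mid !G0.
- rewrite /h1 /h2 eqxx /= /sgn; case: odd; lia.
all: move=> x /[dup] xt; first [move/n1 | move/n2] => [[xX xc]];
  first [exact: h10 | exact: h20].
Qed.
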